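(* Let $K$ be a non-empty compact Hausdorff space, and let $P\colon C(K)\to C(K)$ be a positive linear projection (i.e. $P^2=P$ and $Pf\ge 0$ whenever $f\ge 0$) with $P\mathbb{1}_K=\mathbb{1}_K$. Suppose there exists $\alpha\ge 0$ such that: (i) $\alpha\,\mathrm{id}_{C(K)}\le P$ (i.e. $Pf-\alpha f\ge 0$ for all $f\in C(K)_+$), and (ii) whenever $f\in C(K)$ satisfies $0\le M_f\le P$, then $\|f\|_\infty\le\alpha$. Then either $\alpha=0$ or $\alpha=1/n$ for some $n\in\mathbb{N}$.
   Context: $C(K)$ is the Banach lattice of real-valued continuous functions on $K$ with the pointwise order and sup norm; $\mathbb{1}_K$ is the constant function $1$. For $f\in C(K)$, $M_f\colon C(K)\to C(K)$ is the multiplication operator $M_f(g)=fg$. For operators $S,T$ on $C(K)$, $S\le T$ means $T-S$ is a positive operator. *)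

(* Defs.v *)
From HB Require Import structures.
From mathcomp Require Import all_boot all_order all_algebra.
From mathcomp Require Import all_classical all_reals all_analysis.
Import numFieldNormedType.Exports.
Set Implicit Arguments. Unset Strict Implicit. Unset Printing Implicit Defensive.
Import Order.TTheory GRing.Theory Num.Theory.
Local Open Scope ring_scope.
Local Open Scope classical_set_scope.

(* C(K) is modelled as the functions K -> R that are continuous;
   an operator on C(K) is a map (K -> R) -> (K -> R) whose behaviour is only
   constrained on continuous inputs. *)

Section Defs.
Variables (R : realType) (K : topologicalType).

Definition CK_op_maps (T : (K -> R) -> (K -> R)) : Prop :=
  forall f : K -> R, continuous f -> continuous (T f).

Definition CK_linear (T : (K -> R) -> (K -> R)) : Prop :=
  forall (a : R) (f g : K -> R), continuous f -> continuous g ->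
    T (fun x => a * f x + g x) = (fun x => a * T f x + T g x).

Definition CK_positive (T : (K -> R) -> (K -> R)) : Prop :=
  forall f : K -> R, continuous f -> (forall x, 0 <= f x) -> forall x, 0 <= T f x.

Definition CK_op_le (S T : (K -> R) -> (K -> R)) : Prop :=
  CK_positive (fun f x => T f x - S f x).

Definition mult_op (f : K -> R) : (K -> R) -> (K -> R) :=
  fun g x => f x * g x.

Definition scal_id (a : R) : (K -> R) -> (K -> R) := fun g x => a * g x.

Definition zero_op : (K -> R) -> (K -> R) := fun _ _ => 0.

Definition supnorm (f : K -> R) : R := sup (range (fun x => `|f x|)).

End Defs.

(* Main.v *)
Require Import Defs.
From HB Require Import structures.
From mathcomp Require Import all_boot all_order all_algebra.
From mathcomp Require Import all_classical all_reals all_analysis.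
From mathcomp Require Import ring lra.
Import numFieldNormedType.Exports.
Import Order.TTheory GRing.Theory Num.Theory.
Local Open Scope ring_scope.
Local Open Scope classical_set_scope.

Section Cont.
Variables (R : realType) (K : topologicalType).

Lemma c_cst (c : R) : continuous (fun _ : K => c).
Proof. exact: cst_continuous. Qed.

Lemma c_add (f g : K -> R) : continuous f -> continuous g ->
  continuous (fun x => f x + g x).
Proof. by move=> hf hg x; apply: cvgD; [exact: hf|exact: hg]. Qed.

Lemma c_mul (f g : K -> R) : continuous f -> continuous g ->
  continuous (fun x => f x * g x).
Proof. by move=> hf hg x; apply: cvgM; [exact: hf|exact: hg]. Qed.

Lemma c_opp (f : K -> R) : continuous f -> continuous (fun x => - f x).
Proof. by move=> hf x; apply: cvgN; exact: hf. Qed.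

Lemma c_sub (f g : K -> R) : continuous f -> continuous g ->
  continuous (fun x => f x - g x).
Proof. by move=> hf hg; apply: c_add => //; exact: c_opp. Qed.

Lemma c_min (f g : K -> R) : continuous f -> continuous g ->
  continuous (fun x => Num.min (f x) (g x)).
Proof. by move=> hf hg x; exact: (@continuous_min R K f g x (hf x) (hg x)). Qed.

Lemma c_max (f g : K -> R) : continuous f -> continuous g ->
  continuous (fun x => Num.max (f x) (g x)).
Proof. by move=> hf hg x; exact: (@continuous_max R K f g x (hf x) (hg x)). Qed.

Lemma c_sum (I : Type) (s : seq I) (Q : pred I) (F : I -> K -> R) :
  (forall i, continuous (F i)) -> continuous (fun x => \sum_(i <- s | Q i) F i x).
Proof.
move=> hF; elim: s => [|a s IH].
  by under eq_fun do rewrite big_nil; exact: c_cst.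
under eq_fun do rewrite big_cons.
case: (Q a) => //; exact: c_add.
Qed.

Lemma c_prod (I : Type) (s : seq I) (Q : pred I) (F : I -> K -> R) :
  (forall i, continuous (F i)) -> continuous (fun x => \prod_(i <- s | Q i) F i x).
Proof.
move=> hF; elim: s => [|a s IH].
  by under eq_fun do rewrite big_nil; exact: c_cst.
under eq_fun do rewrite big_cons.
case: (Q a) => //; exact: c_mul.
Qed.

End Cont.
Arguments c_cst {R K}.
Arguments c_add {R K f g}.
Arguments c_mul {R K f g}.
Arguments c_opp {R K f}.
Arguments c_sub {R K f g}.
Arguments c_min {R K f g}.
Arguments c_max {R K f g}.
Arguments c_sum {R K I s Q F}.
Arguments c_prod {R K I s Q F}.

Section Proj.
Variables (R : realType) (K : topologicalType) (P : (K -> R) -> (K -> R)).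
Variable alpha : R.
Hypothesis Pmaps : CK_op_maps P.
Hypothesis Plin : CK_linear P.
Hypothesis Pidem : forall f : K -> R, continuous f -> P (P f) = P f.
Hypothesis Ppos : CK_positive P.
Hypothesis P1 : P (fun _ => 1) = (fun _ => 1).
Hypothesis a0 : 0 < alpha.
Hypothesis Hle : CK_op_le (scal_id alpha) P.

Lemma P0 : P (fun _ => 0) = (fun _ => 0).
Proof.
have H := Plin 1 _ _ (c_cst (0:R)) (c_cst (0:R)).
have E : (fun _ : K => 1 * (0:R) + 0) = (fun _ => 0) by apply/funext => x; rewrite mulr0 addr0.
rewrite E in H; apply/funext => x.
have := congr1 (fun h => h x) H => /=; rewrite mul1r => h; lra.
Qed.

Lemma PD (f g : K -> R) x : continuous f -> continuous g ->
  P (fun y => f y + g y) x = P f x + P g x.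
Proof.
move=> hf hg; have := Plin 1 _ _ hf hg.
have -> : (fun y => 1 * f y + g y) = (fun y => f y + g y) by apply/funext => y; rewrite mul1r.
by move=> ->; rewrite mul1r.
Qed.

Lemma PZ (a : R) (f : K -> R) x : continuous f ->
  P (fun y => a * f y) x = a * P f x.
Proof.
move=> hf; have := Plin a _ _ hf (c_cst (0:R)).
have -> : (fun y => a * f y + 0) = (fun y => a * f y) by apply/funext => y; rewrite addr0.
by move=> ->; rewrite P0 addr0.
Qed.

Lemma PB (f g : K -> R) x : continuous f -> continuous g ->
  P (fun y => f y - g y) x = P f x - P g x.
Proof.
move=> hf hg; have := Plin (-1) _ _ hg hf.
have -> : (fun y => -1 * g y + f y) = (fun y => f y - g y).
  by apply/funext => y; rewrite mulN1r addrC.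
by move=> ->; rewrite mulN1r addrC.
Qed.

Lemma Pc (c : R) x : P (fun _ => c) x = c.
Proof.
have := PZ c (fun _ => 1) x (c_cst (1:R)).
have -> : (fun _ : K => c * 1) = (fun _ => c) by apply/funext => y; rewrite mulr1.
by move=> ->; rewrite P1 mulr1.
Qed.

Lemma Pge0 (f : K -> R) x : continuous f -> (forall y, 0 <= f y) -> 0 <= P f x.
Proof. by move=> hf h; exact: Ppos. Qed.

Lemma Pmono (f g : K -> R) x : continuous f -> continuous g ->
  (forall y, f y <= g y) -> P f x <= P g x.
Proof.
move=> hf hg h; rewrite -subr_ge0 -PB //; apply: Pge0; first exact: c_sub.
by move=> y; rewrite subr_ge0.
Qed.

Lemma Palpha (g : K -> R) x : continuous g -> (forall y, 0 <= g y) ->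
  alpha * g x <= P g x.
Proof. by move=> hg h; have := Hle g hg h x; rewrite /scal_id subr_ge0. Qed.

Lemma Psq_expand (u : K -> R) (c : R) x : continuous u ->
  P (fun y => (u y - c) ^+ 2) x = P (fun y => u y ^+ 2) x - 2 * c * P u x + c ^+ 2.
Proof.
move=> hu.
have hu2 : continuous (fun y => u y ^+ 2) by under eq_fun do rewrite expr2; exact: c_mul.
have -> : (fun y => (u y - c) ^+ 2) = (fun y => (- (2 * c)) * u y + (u y ^+ 2 + c ^+ 2)).
  by apply/funext => y; rewrite sqrrB; ring.
rewrite (Plin _ _ _ hu (c_add hu2 (c_cst _))) /= PD //; last exact: c_cst.
by rewrite Pc; ring.
Qed.

Lemma Psq0 (k : K -> R) x : continuous k ->
  P (fun y => (P k y - P k x) ^+ 2) x = 0.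
Proof.
move=> hk; set u := P k.
have hu : continuous u by exact: Pmaps.
have Pu : P u = u by exact: Pidem.
have hu2 : continuous (fun y => u y ^+ 2) by under eq_fun do rewrite expr2; exact: c_mul.
have jen : forall y, u y ^+ 2 <= P (fun z => u z ^+ 2) y.
  move=> y; have hc : continuous (fun z => (u z - u y) ^+ 2).
    by under eq_fun do rewrite expr2; apply: c_mul; apply: c_sub => //; exact: c_cst.
  have := Pge0 (fun z => (u z - u y) ^+ 2) y hc (fun z => sqr_ge0 _).
  by rewrite Psq_expand // Pu => h; lra.
set v := fun y => P (fun z => u z ^+ 2) y - u y ^+ 2.
have hv : continuous v by apply: c_sub => //; exact: Pmaps.
have Pv : forall y, P v y = 0.
  move=> y; rewrite /v PB //; last exact: Pmaps.
  by rewrite Pidem // subrr.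
have v0 : forall y, v y = 0.
  move=> y; have vge : 0 <= v y by rewrite /v subr_ge0.
  have := Palpha v y hv (fun z => (ltac:(rewrite /v subr_ge0; exact: jen) : 0 <= v z)).
  rewrite Pv => h.
  apply/eqP; rewrite eq_le vge andbT.
  by rewrite -(pmulr_rle0 _ a0).
rewrite Psq_expand // Pu.
have := v0 x; rewrite /v => h; lra.
Qed.


Hypothesis Hhaus : hausdorff_space K.
Hypothesis Hcomp : compact [set: K].

Definition Fib (x z : K) := forall k : K -> R, continuous k -> P k z = P k x.

Lemma Fib_refl x : Fib x x.
Proof. by []. Qed.

Lemma Fib_sym x z : Fib x z -> Fib z x.
Proof. by move=> h k hk; rewrite h. Qed.

Lemma Fib_trans x y z : Fib x y -> Fib y z -> Fib x z.
Proof. by move=> h1 h2 k hk; rewrite h2 // h1. Qed.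

Lemma F3 x (g : K -> R) : continuous g -> (forall y, 0 <= g y) ->
  (forall z, Fib x z -> g z = 0) -> P g x = 0.
Proof.
move=> hg g0 gF.
suff H : forall e, 0 < e -> P g x <= e.
  apply/eqP; rewrite eq_le (Pge0 g x hg g0) andbT.
  rewrite leNgt; apply/negP => h.
  have := H (P g x / 2) (divr_gt0 h (ltr0Sn _ 1)); lra.
move=> e e0.
pose D := [set h : K -> R | [/\ continuous h, (forall y, 0 <= h y) & P h x = 0]].
pose B := fun h : K -> R => [set y | e + h y <= g y].
have [[h [hc h0 hx] Bh0]|nB] := pselect (exists2 h, D h & B h = set0).
  have lt : forall y, g y <= e + h y.
    move=> y; rewrite leNgt; apply/negP => hy.
    have : B h y by rewrite /B /=; exact: ltW.
    by rewrite Bh0.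
  have := Pmono g (fun y => e + h y) x hg (c_add (c_cst e) hc) lt.
  by rewrite PD //; [rewrite Pc hx addr0 | exact: c_cst].
have Bn0 : forall h, D h -> B h !=set0.
  by move=> h Dh; apply/set0P/eqP => E; apply: nB; exists h.
have D0 : D (fun _ => 0).
  by split; [exact: c_cst | move=> _; exact: lexx | rewrite P0].
have FF : Filter (filter_from D B).
  apply: filter_from_filter; first by exists (fun _ => 0).
  move=> h1 h2 [c1 p1 z1] [c2 p2 z2]; exists (fun y => h1 y + h2 y).
    split; first exact: c_add.
      by move=> y; apply: addr_ge0.
    by rewrite PD // z1 z2 addr0.
  move=> y; rewrite /B /= => hy; split.
    by have := p2 y; lra.
  by have := p1 y; lra.
have PF : ProperFilter (filter_from D B) by apply: filter_from_proper.
have [y [_ cy]] := Hcomp (filter_from D B) PF filterT.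
rewrite clusterE in cy.
have By : forall h, D h -> B h y.
  move=> h Dh; have := cy (B h) (@in_filter_from _ _ D B h Dh).
  have clB : closed (B h).
    have -> : B h = (fun z => g z - h z - e) @^-1` [set r : R | 0 <= r].
      by apply/funext => z; apply/propext; rewrite /B /=; split => hz; lra.
    apply: preimage_closed; last exact: closed_ge.
    move=> z _; case: Dh => hc _ _.
    by apply: c_sub; [exact: c_sub | exact: c_cst].
  by move/closure_id : clB => <-.
have gy : e <= g y by have := By _ D0; rewrite /B /= addr0.
have nF : ~ Fib x y by move=> F; move: gy; rewrite gF //; lra.
have [k hk] : exists k : K -> R, ~ (continuous k -> P k y = P k x) by apply/existsNP.
move/not_implyP : hk => [hk hky].
set d := (P k y - P k x) ^+ 2.
have d0 : 0 < d.
  rewrite /d lt_neqAle sqr_ge0 andbT eq_sym sqrf_eq0 subr_eq0.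
  by apply/eqP.
set c := (g y + 1) / d.
have c0 : 0 <= c by rewrite /c divr_ge0 //; [have := g0 y; lra | exact: ltW].
pose h := fun z => c * (P k z - P k x) ^+ 2.
have hc : continuous (fun z => (P k z - P k x) ^+ 2).
  under eq_fun do rewrite expr2.
  by apply: c_mul; apply: c_sub; (try exact: Pmaps); exact: c_cst.
have Dh : D h.
  split; first by apply: c_mul => //; exact: c_cst.
    by move=> z; apply: mulr_ge0 => //; exact: sqr_ge0.
  by rewrite /h PZ // Psq0 // mulr0.
have := By h Dh; rewrite /B /h /= -/d /c divfK; last by rewrite gt_eqF.
lra.
Qed.

Lemma F3' x (g : K -> R) : continuous g -> (forall y, 0 <= g y) ->
  P g x != 0 -> exists z, Fib x z /\ g z != 0.
Proof.
move=> hg g0 /eqP Pg; apply: contrapT => hne; apply: Pg; apply: (F3 x g hg g0) => z Fz.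
apply: contrapT => gz; apply: hne; exists z; split => //; exact/eqP.
Qed.


Lemma le_sum_term (I : eqType) (r : seq I) (Q : pred I) (F : I -> R) j :
  (forall i, 0 <= F i) -> j \in r -> Q j -> F j <= \sum_(i <- r | Q i) F i.
Proof.
move=> F0; elim: r => // a r IH; rewrite inE big_cons => /orP [/eqP <-| jr] Qj.
  by rewrite Qj; apply: ler_wpDr; [apply: sumr_ge0 | exact: lexx].
case: (Q a); last exact: IH.
by rewrite addrC; apply: ler_wpDr => //; exact: IH.
Qed.

Lemma sep2 (z q : K) : z != q -> exists f : K -> R,
  [/\ continuous f, forall y, 0 <= f y <= 1, f q = 0 & f z = 1].
Proof.
move=> zq.
have nK := compact_normal Hhaus Hcomp.
have cl1 := accessible_closed_set1 (hausdorff_accessible Hhaus).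
have dj : [set q] `&` [set z] = set0.
  apply/seteqP; split => y //= [-> yz].
  by move: zq; rewrite yz eqxx.
have := (@normal_separatorP R K).1 nK _ _ (cl1 q) (cl1 z) dj.
move/(@uniform_separatorP _ R) => [f [cf rf f0 f1]].
exists f; split => //.
- move=> y; have := rf (f y) (imageT f y).
  by rewrite /= in_itv /=.
- by apply: f0; exists q.
- by apply: f1; exists z.
Qed.

Lemma bumps (s : seq K) : uniq s -> exists G : K -> K -> R,
  [/\ forall z, continuous (G z),
      forall z y, 0 <= G z y <= 1,
      forall z, z \in s -> G z z = 1 &
      forall z z' y, z \in s -> z' \in s -> z != z' -> G z y = 0 \/ G z' y = 0].
Proof.
move=> us.
have : forall p : K * K, exists f : K -> R, [/\ continuous f,
    forall y, 0 <= f y <= 1 & p.1 != p.2 -> f p.2 = 0 /\ f p.1 = 1].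
  move=> [z q] /=; have [zq|zq] := eqVneq z q.
    exists (fun _ => 1); split => //; first exact: c_cst.
    by move=> y; rewrite ler01 lexx.
  have [f [cf rf fq fz]] := sep2 z q zq.
  by exists f; split.
move/choice => [U hU].
pose h z y := \prod_(q <- s | q != z) U (z, q) y.
have hc : forall z, continuous (h z).
  by move=> z; apply: c_prod => q; have [] := hU (z, q).
have h01 : forall z y, 0 <= h z y <= 1.
  move=> z y; apply/andP; split.
    by apply: prodr_ge0 => q _; have [_ /(_ y) /andP[]] := hU (z, q).
  by apply: prodr_ile1 => q _; have [_ /(_ y)] := hU (z, q).
have hzz : forall z, h z z = 1.
  move=> z; apply: big1_seq => q /andP [qz _].
  by have [_ _ /(_ (ltac:(by rewrite /= eq_sym)))[]] := hU (z, q).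
have hqz : forall z q, z \in s -> q != z -> h q z = 0.
  move=> z q zs qz; apply/eqP; rewrite prodf_seq_eq0; apply/hasP; exists z => //.
  rewrite eq_sym qz /=; have [_ _ /(_ qz) [-> _]] := hU (q, z).
  by rewrite eqxx.
pose G z y := Num.max 0 (h z y - \sum_(q <- s | q != z) h q y).
exists G; split.
- move=> z; apply: c_max; first exact: c_cst.
  by apply: c_sub => //; apply: c_sum.
- move=> z y; rewrite /G le_max lexx /=; rewrite ge_max ler01 /=.
  have := h01 z y => /andP [_ h1].
  have : 0 <= \sum_(q <- s | q != z) h q y.
    by apply: sumr_ge0 => q _; have /andP[] := h01 q y.
  lra.
- move=> z zs; rewrite /G hzz big1_seq ?subr0.
    by apply/eqP; rewrite eq_le ge_max ler01 lexx le_max lexx orbT.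
  by move=> q /andP [qz _]; exact: hqz.
- move=> z z' y zs z's zz'.
  rewrite /G.
  have S0 : forall a, 0 <= \sum_(q <- s | q != a) h q y.
    by move=> a; apply: sumr_ge0 => q _; have /andP[] := h01 q y.
  have L1 : h z' y <= \sum_(q <- s | q != z) h q y.
    apply: (@le_sum_term _ s (fun q => q != z) (fun q => h q y) z') => //.
      by move=> i; have /andP[] := h01 i y.
    by rewrite /= eq_sym.
  have L2 : h z y <= \sum_(q <- s | q != z') h q y.
    apply: (@le_sum_term _ s (fun q => q != z') (fun q => h q y) z) => //.
    by move=> i; have /andP[] := h01 i y.
  have [A|A] := leP (h z y - \sum_(q <- s | q != z) h q y) 0.
    by left.
  right; have B : h z' y - \sum_(q <- s | q != z') h q y <= 0.
    by have := S0 z'; lra.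
  by apply/max_idPl.
Qed.

Lemma bump_sum_le1 (s : seq K) (G : K -> K -> R) y : uniq s ->
  (forall z y, 0 <= G z y <= 1) ->
  (forall z z' y, z \in s -> z' \in s -> z != z' -> G z y = 0 \/ G z' y = 0) ->
  \sum_(z <- s) G z y <= 1.
Proof.
move=> us G01 dj.
have [[z0 z0s nz]|nz] := pselect (exists2 z, z \in s & G z y != 0).
  rewrite (bigD1_seq z0) //= big1_seq ?addr0.
    by have /andP[] := G01 z0 y.
  move=> z /andP [zz0 zs]; have [//|] := dj z z0 y zs z0s zz0.
  by move/eqP: nz.
rewrite big1_seq ?ler01 // => z /andP [_ zs].
by apply: contrapT => hz; apply: nz; exists z => //; apply/eqP.
Qed.

Lemma bump_sum_at (s : seq K) (G : K -> K -> R) q : uniq s -> q \in s ->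
  (forall z, z \in s -> G z z = 1) ->
  (forall z z' y, z \in s -> z' \in s -> z != z' -> G z y = 0 \/ G z' y = 0) ->
  \sum_(z <- s) G z q = 1.
Proof.
move=> us qs G1 dj.
rewrite (bigD1_seq q) //= G1 // big1_seq ?addr0 //.
move=> z /andP [zq zs]; have [//|] := dj z q q zs qs zq.
by rewrite G1 // => /eqP; rewrite oner_eq0.
Qed.


Lemma P_sum (I : Type) (s : seq I) (F : I -> K -> R) x :
  (forall i, continuous (F i)) ->
  P (fun y => \sum_(i <- s) F i y) x = \sum_(i <- s) P (F i) x.
Proof.
move=> hF; elim: s => [|a s IH].
  have -> : (fun y => \sum_(i <- [::]) F i y) = (fun _ => 0).
    by apply/funext => y; rewrite big_nil.
  by rewrite big_nil Pc.
have -> : (fun y => \sum_(i <- a :: s) F i y) = (fun y => F a y + \sum_(i <- s) F i y).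
  by apply/funext => y; rewrite big_cons.
by rewrite PD // ?big_cons ?IH //; exact: c_sum.
Qed.

Lemma sum_const_seq (I : Type) (s : seq I) (c : R) : \sum_(z <- s) c = (size s)%:R * c.
Proof.
elim: s => [|a s IH]; first by rewrite big_nil mul0r.
by rewrite big_cons IH /= mulrS mulrDl mul1r.
Qed.

Lemma fib_bound x (s : seq K) : uniq s -> (forall z, z \in s -> Fib x z) ->
  (size s)%:R * alpha <= 1.
Proof.
move=> us Fs; have [G [Gc G01 G1 dj]] := bumps s us.
have H1 : \sum_(z <- s) P (G z) x <= 1.
  rewrite -P_sum // -(Pc 1 x); apply: Pmono => //; first exact: c_sum.
    exact: c_cst.
  by move=> y; apply: bump_sum_le1.
apply: le_trans H1; rewrite -sum_const_seq big_seq [X in _ <= X]big_seq.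
apply: ler_sum => z zs.
rewrite -(Fs z zs (G z) (Gc z)).
have := Palpha (G z) z (Gc z) (fun y => proj1 (andP (G01 z y))).
by rewrite G1 // mulr1.
Qed.

Lemma exists_max (x1 : K) : exists M x0 s0, [/\ uniq s0, size s0 = M,
  (forall z, z \in s0 -> Fib x0 z) &
  forall x s, uniq s -> (forall z, z \in s -> Fib x z) -> (size s <= M)%N].
Proof.
pose Qn := fun n => `[< exists x s, [/\ uniq s, size s = n & forall z, z \in s -> Fib x z] >].
have ex : exists n, Qn n.
  exists 1%N; apply/asboolP; exists x1, [:: x1]; split => // z.
  by rewrite inE => /eqP ->; exact: Fib_refl.
pose N := Num.Def.archi_bound (alpha^-1).
have ub : forall n, Qn n -> (n <= N)%N.
  move=> n /asboolP [x [s [us sz Fs]]].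
  have := fib_bound x s us Fs; rewrite sz => hb.
  have hN := archi_boundP (ltW (ltac:(by rewrite invr_gt0) : 0 < alpha^-1)).
  have : n%:R < N%:R :> R.
    apply: le_lt_trans hN; rewrite -div1r ler_pdivlMr //.
  by rewrite ltr_nat => /ltnW.
case: (ex_maxnP ex ub) => M /asboolP [x0 [s0 [us0 sz0 F0]]] maxM.
exists M, x0, s0; split => // x s us Fs.
by apply: maxM; apply/asboolP; exists x, s.
Qed.


Hypothesis Hii : forall f : K -> R, continuous f ->
     CK_op_le (@zero_op R K) (mult_op f) -> CK_op_le (mult_op f) P ->
     supnorm f <= alpha.

Lemma main_sec (x1 : K) : exists n : nat, (0 < n)%N /\ alpha = n%:R^-1.
Proof.
have [M [x0 [s0 [us0 sz0 F0 maxM]]]] := exists_max x1.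
have Ext : forall x t q, uniq t -> size t = M -> (forall z, z \in t -> Fib x z) ->
    Fib x q -> q \in t.
  move=> x t q ut st Ft Fq; apply: contraT => qt.
  have := maxM x (q :: t); rewrite /= qt ut st ltnn => H; apply: H => //.
  by move=> z; rewrite inE => /orP [/eqP ->|/Ft].
have [G [Gc G01 G1 dj]] := bumps s0 us0.
have G0 : forall z y, 0 <= G z y by move=> z y; have /andP[] := G01 z y.
have PGc : forall z, continuous (P (G z)) by move=> z; exact: Pmaps.
have PG0 : forall z y, 0 <= P (G z) y by move=> z y; exact: Pge0.
have PGz : forall z, z \in s0 -> alpha <= P (G z) x0.
  move=> z zs; rewrite -(F0 z zs (G z) (Gc z)).
  by have := Palpha (G z) z (Gc z) (G0 z); rewrite G1 // mulr1.
have Sum1 : \sum_(z <- s0) P (G z) x0 = 1.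
  pose H := fun y => 1 - \sum_(z <- s0) G z y.
  have Hc : continuous H by apply: c_sub; [exact: c_cst | exact: c_sum].
  have H0 : forall y, 0 <= H y.
    by move=> y; rewrite /H subr_ge0; apply: bump_sum_le1.
  have := F3 x0 H Hc H0.
  rewrite /H PB //; [|exact: c_cst|exact: c_sum].
  rewrite Pc P_sum // => h.
  have : 1 - \sum_(i <- s0) P (G i) x0 = 0.
    apply: h => q Fq; rewrite bump_sum_at ?subrr //.
    exact: (Ext x0 s0 q us0 sz0 F0 Fq).
  by move=> e; apply/eqP; rewrite eq_sym -subr_eq0; apply/eqP.
have Le : forall z1, z1 \in s0 -> P (G z1) x0 <= alpha.
  move=> z1 z1s.
  pose m y := G z1 y * \prod_(j <- s0) P (G j) y.
  pose f y := Num.max alpha (Num.min (P (G z1) y) (alpha + m y)).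
  have mc : continuous m by apply: c_mul => //; exact: c_prod.
  have fc : continuous f.
    apply: c_max; first exact: c_cst.
    by apply: c_min => //; apply: c_add => //; exact: c_cst.
  have f0 : forall y, 0 <= f y.
    by move=> y; rewrite /f le_max (ltW a0).
  have ClaimC : forall y, 0 < G z1 y -> (forall j, j \in s0 -> 0 < P (G j) y) ->
      forall q, Fib y q -> q != y -> G z1 q = 0.
    move=> y Gy Pj.
    have : forall j, exists q, j \in s0 -> Fib y q /\ G j q != 0.
      move=> j; have [js|js] := boolP (j \in s0); last by exists y.
      have [q [Fq Gq]] := F3' y (G j) (Gc j) (G0 j) (lt0r_neq0 (Pj j js)).
      by exists q.
    move/choice => [phi hphi].
    have phiF : forall j, j \in s0 -> Fib y (phi j) by move=> j /(hphi j) [].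
    have phiG : forall j, j \in s0 -> G j (phi j) != 0 by move=> j /(hphi j) [].
    have uniqP : forall j p, j \in s0 -> p \in s0 -> G p (phi j) != 0 -> p = j.
      move=> j p js ps Gp; apply/eqP; apply: contraT => pj.
      have [] := dj p j (phi j) ps js pj.
        by move/eqP: Gp.
      by move/eqP: (phiG j js).
    pose t := map phi s0.
    have ut : uniq t.
      rewrite map_inj_in_uniq // => j k js ks ejk.
      apply: (uniqP k j ks js); rewrite -ejk; exact: phiG.
    have st : size t = M by rewrite size_map.
    have Ft : forall z, z \in t -> Fib y z by move=> z /mapP [j js ->]; exact: phiF.
    have key : forall p, Fib y p -> G z1 p != 0 -> p = phi z1.
      move=> p Fp Gp; have /mapP [j js pj] := Ext y t p ut st Ft Fp.
      rewrite pj in Gp *.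
      by rewrite (uniqP j z1 js z1s Gp).
    move=> q Fq qy; apply/eqP; apply: contraT => Gq.
    have e1 := key q Fq Gq.
    have e2 := key y (Fib_refl y) (lt0r_neq0 Gy).
    by move: qy; rewrite e1 e2 eqxx.
  have Mz : CK_op_le (@zero_op R K) (mult_op f).
    move=> h hc h0 y; rewrite /zero_op /mult_op subr0.
    exact: mulr_ge0.
  have Mle : CK_op_le (mult_op f) P.
    move=> h hc h0 y; rewrite /mult_op subr_ge0.
    have [A|A] := boolP (Num.min (P (G z1) y) (alpha + m y) <= alpha).
      have -> : f y = alpha by apply/max_idPl.
      exact: Palpha.
    rewrite -ltNge lt_min in A; case/andP: A => A1 A2.
    have fy : f y <= P (G z1) y.
      by rewrite /f ge_max (ltW A1) ge_min lexx.
    have my : m y != 0 by apply: lt0r_neq0; lra.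
    have Gy : 0 < G z1 y.
      rewrite lt0r G0 andbT; move: my; rewrite /m mulf_eq0 negb_or.
      by case/andP.
    have Pj : forall j, j \in s0 -> 0 < P (G j) y.
      move=> j js; rewrite lt0r PG0 andbT.
      move: my; rewrite /m mulf_eq0 negb_or => /andP [_].
      rewrite prodf_seq_neq0 => /allP /(_ j js).
      by [].
    have van := ClaimC y Gy Pj.
    set c := h y / G z1 y.
    pose r := fun p => Num.max (c * G z1 p - h p) 0.
    have rc : continuous r.
      apply: c_max; last exact: c_cst.
      by apply: c_sub => //; apply: c_mul => //; exact: c_cst.
    have r0 : forall p, 0 <= r p by move=> p; rewrite /r le_max lexx orbT.
    have Pr : P r y = 0.
      apply: F3 => // p Fp; rewrite /r; apply/max_idPr.
      have [->|py] := eqVneq p y.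
        by rewrite /c divfK ?subrr // gt_eqF.
      by rewrite van // mulr0 sub0r oppr_le0.
    have hcG : continuous (fun p => c * G z1 p) by apply: c_mul => //; exact: c_cst.
    have := Pmono (fun p => c * G z1 p - h p) r y (c_sub hcG hc) rc.
    rewrite Pr PB // PZ // => /(_ (fun p => ltac:(rewrite /r le_max lexx; done))) H.
    have hyc : h y <= c.
      rewrite /c ler_pdivlMr //.
      have := G01 z1 y => /andP [_ G1'].
      have := h0 y; nra.
    have PG1 : 0 <= P (G z1) y := PG0 z1 y.
    have : f y * h y <= P (G z1) y * h y by apply: ler_wpM2r.
    have : P (G z1) y * h y <= c * P (G z1) y by rewrite [X in X <= _]mulrC; apply: ler_wpM2r.
    lra.
  have sn := Hii f fc Mz Mle.
  have fz1 : f z1 <= supnorm f.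
    rewrite /supnorm; have -> : f z1 = `|f z1| by rewrite ger0_norm.
    apply: sup_upper_bound; last by exists z1.
    split; first by exists `|f z1|, z1.
    exists (Num.max alpha 1) => _ [y _ <-].
    rewrite ger0_norm // /f ge_max le_max lexx /= ge_min.
    apply/orP; left; rewrite le_max; apply/orP; right.
    rewrite -(Pc 1 y); apply: Pmono => //; first exact: c_cst.
    by move=> p; have /andP[] := G01 z1 p.
  have mz1 : 0 < m z1.
    rewrite /m G1 // mul1r big_seq; apply: prodr_gt0 => j js.
    by apply: (lt_le_trans a0); rewrite (F0 z1 z1s (G j) (Gc j)); apply: PGz.
  have := le_trans fz1 sn; rewrite /f ge_max lexx /= ge_min.
  rewrite (F0 z1 z1s (G z1) (Gc z1)).
  case/orP => // h; lra.
have Eq : forall z, z \in s0 -> P (G z) x0 = alpha.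
  by move=> z zs; apply/eqP; rewrite eq_le Le // PGz.
move: Sum1; rewrite (eq_big_seq (fun _ => alpha)) // sum_const_seq sz0 => hM.
have Mpos : (0 < M)%N.
  by rewrite lt0n; apply/eqP => M0; move: hM; rewrite M0 mul0r => /eqP; rewrite eq_sym oner_eq0.
exists M; split => //.
have M0 : M%:R != 0 :> R by rewrite pnatr_eq0 -lt0n.
by apply: (mulfI M0); rewrite hM mulfV.
Qed.

End Proj.

Theorem theorem2p1 (R : realType) (K : topologicalType)
  (P : (K -> R) -> (K -> R)) (alpha : R) :
  hausdorff_space K -> compact [set: K] -> [set: K] !=set0 ->
  CK_op_maps P -> CK_linear P ->
  (forall f : K -> R, continuous f -> P (P f) = P f) ->
  CK_positive P ->
  P (fun _ => 1) = (fun _ => 1) ->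
  0 <= alpha ->
  CK_op_le (scal_id alpha) P ->
  (forall f : K -> R, continuous f ->
     CK_op_le (@zero_op R K) (mult_op f) -> CK_op_le (mult_op f) P ->
     supnorm f <= alpha) ->
  alpha = 0 \/ exists n : nat, (0 < n)%N /\ alpha = n%:R^-1.
Proof.
move=> Hh Hc [x1 _] Pm Pl Pi Pp P1 a0 Hle Hii.
have [->|an0] := eqVneq alpha 0; first by left.
right; have ap : 0 < alpha by rewrite lt0r an0 a0.
exact: (@main_sec R K P alpha Pm Pl Pi Pp P1 ap Hle Hh Hc Hii x1).
Qed.
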